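(* Let $n\ge 0$ and let $R$ be a rook placement in the double staircase $2\delta_n$. Then the word $d(R)$ is a Dyck path of length $2n+2$, i.e. every prefix of $d(R)$ contains at least as many steps $\nearrow$ as steps $\searrow$, and $d(R)$ contains $n+1$ steps of each kind.
   Context: The double staircase $2\delta_n$ is the Young diagram (French convention: rows drawn bottom to top, left-justified) with row lengths $2n,2n-2,\dots,2$ from bottom to top; its columns are numbered $1,\dots,2n$ from left to right. A rook placement of size $n$ is a set of dots placed in cells of $2\delta_n$ such that each row contains exactly one dot and each column contains at most one dot. For such $R$, $d(R)$ is the word $w_1\cdots w_{2n+2}$ over $\{\nearrow,\searrow\}$ defined by: $w_1=\nearrow$, $w_{2n+2}=\searrow$, and for $2\le i\le 2n+1$, $w_i=\nearrow$ if column $i-1$ of $R$ contains a dot and $w_i=\searrow$ otherwise. A Dyck path of length $2m$ is a lattice path from $(0,0)$ to $(2m,0)$ with steps $\nearrow=(1,1)$ and $\searrow=(1,-1)$ never going below the $x$-axis (identified with the word of its steps). *)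

(* Defs.v *)
From mathcomp Require Import all_boot.
Set Implicit Arguments. Unset Strict Implicit. Unset Printing Implicit Defensive.

Definition up := true.
Definition down := false.

(* Double staircase 2δ_n, French convention, rows and columns 0-based:
   row r (r < n, r = 0 is the bottom row) has length 2n - 2r, so cell
   (r, c) belongs to 2δ_n iff c < 2 * (n - r).
   A rook placement of size n with exactly one dot per row is a function
   f assigning to each row r the column f r of its dot; "at most one dot
   per column" is injectivity of f. *)
Definition rook_placement (n : nat) (f : 'I_n -> 'I_(2 * n)) : Prop :=
  (forall r : 'I_n, (nat_of_ord (f r) < 2 * (n - r))%N) /\ injective f.

(* d(R): w_1 = up, w_(2n+2) = down, and for 2 <= i <= 2n+1,
   w_i = up iff column i-1 (1-based), i.e. column i-2 (0-based), has a dot. *)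
Definition dword (n : nat) (f : 'I_n -> 'I_(2 * n)) : seq bool :=
  up :: [seq (j \in codom f) | j <- enum 'I_(2 * n)] ++ [:: down].

Definition dyck_path (m : nat) (w : seq bool) : Prop :=
  size w = (2 * m)%N /\
  (forall k : nat, (count_mem down (take k w) <= count_mem up (take k w))%N) /\
  count_mem up w = count_mem down w.

(* Main.v *)
Require Import Defs.
From mathcomp Require Import all_boot.
From mathcomp Require Import zify.

Lemma count_ge_iota (a h : nat) :
  count (fun i => a <= i) (iota 0 (a + h)) = h.
Proof.
elim: h => [|h IH].
  apply/eqP; rewrite eqn0Ngt -has_count; apply/hasPn => x.
  rewrite mem_iota /= addn0 => H; rewrite -ltnNge; exact: H.
by rewrite addnS -addn1 iotaD count_cat IH /= add0n leq_addr addn0 addn1.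
Qed.

Section S.
Variables (n : nat) (f : 'I_n -> 'I_(2 * n)).
Hypothesis Hb : forall r : 'I_n, (nat_of_ord (f r) < 2 * (n - r))%N.
Hypothesis Hi : injective f.

Definition P (j : nat) : bool := has (fun r => val (f r) == j) (enum 'I_n).

Lemma codomE (j : 'I_(2 * n)) : (j \in codom f) = P j.
Proof.
apply/codomP/hasP => [[r ->]|[r _ /eqP H]].
  by exists r; rewrite ?mem_enum.
by exists r; apply: val_inj.
Qed.

Lemma wordE : [seq (j \in codom f) | j <- enum 'I_(2 * n)] = map P (iota 0 (2 * n)).
Proof.
rewrite -val_enum_ord -map_comp; apply: eq_map => j /=; exact: codomE.
Qed.

Lemma lower (m : nat) : m <= 2 * n -> m./2 <= count P (iota 0 m).
Proof.
move=> Hm.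
set h := m./2.
have Hh : h.*2 <= m by rewrite -[X in _ <= X](odd_double_half m) leq_addl.
have Hhn : h <= n by move: Hh Hm; rewrite -muln2; lia.
pose R := [seq val (f r) | r <- [seq r : 'I_n <- enum 'I_n | n - h <= nat_of_ord r]].
have uR : uniq R.
  rewrite map_inj_uniq; first by apply: filter_uniq; apply: enum_uniq.
  by move=> x y /val_inj; apply: Hi.
have sR : {subset R <= filter P (iota 0 m)}.
  move=> x /mapP[r]; rewrite mem_filter => /andP[Hr _] ->.
  rewrite mem_filter mem_iota add0n; apply/andP; split.
    by apply/hasP; exists r; rewrite ?mem_enum.
  have := Hb r; move: Hr Hh; rewrite -muln2 /=; lia.
have := uniq_leq_size uR sR.
rewrite size_filter size_map size_filter.
suff -> : count (fun r : 'I_n => n - h <= r) (enum 'I_n) = h by [].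
rewrite -(count_map val (fun i => n - h <= i)) val_enum_ord.
by rewrite -[X in iota 0 X](subnK Hhn) count_ge_iota.
Qed.

Lemma total : count P (iota 0 (2 * n)) = n.
Proof.
apply/eqP; rewrite eqn_leq; apply/andP; split; last first.
  by have := @lower (2 * n) (leqnn _); rewrite mul2n doubleK.
have uF : uniq (filter P (iota 0 (2 * n))) by rewrite filter_uniq ?iota_uniq.
have sF : {subset filter P (iota 0 (2 * n)) <= [seq val (f r) | r <- enum 'I_n]}.
  move=> x; rewrite mem_filter => /andP[/hasP[r _ /eqP <-] _].
  by apply: map_f; rewrite mem_enum.
by have := uniq_leq_size uF sF; rewrite size_filter size_map size_enum_ord.
Qed.

Lemma cnt_t s : count_mem true (map P s) = count P s.
Proof. by rewrite count_map; apply: eq_count => x /=; case: (P x). Qed.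

Lemma cnt_f s : count_mem false (map P s) = size s - count P s.
Proof.
rewrite count_map -(count_predC P s) addKn; apply: eq_count => x /=.
by case: (P x).
Qed.

End S.

Theorem mainTheorem1 (n : nat) (f : 'I_n -> 'I_(2 * n)) :
  rook_placement f ->
  dyck_path n.+1 (dword f) /\
  (forall k : nat,
     (count_mem down (take k (dword f)) <= count_mem up (take k (dword f)))%N) /\
  count_mem up (dword f) = n.+1 /\ count_mem down (dword f) = n.+1.
Proof.
move=> [Hb Hi].
have Ht := @total n f Hb Hi.
have Hup : count_mem up (dword f) = n.+1.
  rewrite /dword wordE /= count_cat cnt_t Ht /=; lia.
have Hdn : count_mem down (dword f) = n.+1.
  rewrite /dword wordE /= count_cat cnt_f size_iota Ht /=; lia.
have Hpre : forall k : nat,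
   (count_mem down (take k (dword f)) <= count_mem up (take k (dword f)))%N.
  case=> [|k] //.
  have [Hk|Hk] := leqP k (2 * n); last first.
    rewrite take_oversize ?Hup ?Hdn // /dword /=; rewrite size_cat size_map size_enum_ord /=; lia.
  rewrite /dword wordE /= take_cat size_map size_iota.
  have -> : (if k < 2 * n then take k (map (P n f) (iota 0 (2 * n)))
        else map (P n f) (iota 0 (2 * n)) ++ take (k - 2 * n) [:: down]) =
        map (P n f) (iota 0 k).
    case: ltnP => H.
      by rewrite -map_take take_iota (minn_idPl (ltnW H)).
    have -> : k = 2 * n by apply/eqP; rewrite eqn_leq Hk H.
    by rewrite subnn take0 cats0.
  rewrite cnt_t cnt_f size_iota.
  have := @lower n f Hb Hi k Hk.
  have := odd_double_half k.
  move: (count _ _) (k./2) => c a; case: (odd k) => /=; rewrite -muln2; lia.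
have Hsz : size (dword f) = 2 * n.+1.
  rewrite /dword /= size_cat size_map size_enum_ord /=; lia.
split; last by split; [exact: Hpre | split; [exact: Hup | exact: Hdn]].
split; first exact: Hsz.
split; first exact: Hpre.
by rewrite Hup Hdn.
Qed.
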